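(* Let $(R,\mathfrak{m})$ be a Noetherian local ring, $M$ a finitely generated $R$-module and $L$ a submodule of $M$. Let $N$ be an integer with $N>\mathrm{AR}(\mathfrak{m},L\subseteq M)$. If $K$ is a submodule of $M$ such that $L\equiv K \bmod \mathfrak{m}^NM$ (i.e. $L+\mathfrak{m}^NM=K+\mathfrak{m}^NM$), then $L^*\subseteq K^*$.
   Context: The Artin–Rees number $\mathrm{AR}(\mathfrak{m},L\subseteq M)$ is the least integer $s$ such that $\mathfrak{m}^nM\cap L=\mathfrak{m}^{n-s}(\mathfrak{m}^sM\cap L)$ for all $n\ge s$. For a submodule $L\subseteq M$, the initial module $L^*$ is the graded $\mathrm{gr}_{\mathfrak{m}}(R)$-submodule of $\mathrm{gr}_{\mathfrak{m}}(M)=\bigoplus_{i\ge0}\mathfrak{m}^iM/\mathfrak{m}^{i+1}M$ given by the kernel of the natural map $\mathrm{gr}_{\mathfrak{m}}(M)\to\mathrm{gr}_{\mathfrak{m}}(M/L)$; equivalently $L^*=\bigoplus_{i\ge0}(L\cap\mathfrak{m}^iM+\mathfrak{m}^{i+1}M)/\mathfrak{m}^{i+1}M$. *)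

(* Defs.v *)
From mathcomp Require Import all_boot all_algebra.
Set Implicit Arguments. Unset Strict Implicit. Unset Printing Implicit Defensive.
Import GRing.Theory.
Local Open Scope ring_scope.

Section CommAlg.
Variable R : comUnitRingType.

Definition is_ideal (I : R -> Prop) : Prop :=
  [/\ I 0, (forall x y, I x -> I y -> I (x + y)) & (forall r x, I x -> I (r * x))].

Definition noetherian_ring : Prop :=
  forall I : R -> Prop, is_ideal I ->
    exists n (g : 'I_n -> R), forall x,
      I x <-> exists c : 'I_n -> R, x = \sum_(i < n) c i * g i.

(* (R, m) is local with maximal ideal m: m is a proper ideal and every
   element outside m is a unit (so m is the unique maximal ideal). *)
Definition local_ring_with_max (m : R -> Prop) : Prop :=
  [/\ is_ideal m, ~ m 1 & forall x, ~ m x -> x \is a GRing.unit].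

Variable M : lmodType R.

Definition is_submod (L : M -> Prop) : Prop :=
  [/\ L 0, (forall x y, L x -> L y -> L (x + y)) & (forall r x, L x -> L (r *: x))].

Definition fin_gen_module : Prop :=
  exists n (g : 'I_n -> M), forall x : M,
    exists c : 'I_n -> R, x = \sum_(i < n) c i *: g i.

Definition ideal_mul (I : R -> Prop) (P : M -> Prop) : M -> Prop :=
  fun x => exists n (a : 'I_n -> R) (y : 'I_n -> M),
    [/\ forall i, I (a i), forall i, P (y i) & x = \sum_(i < n) a i *: y i].

Fixpoint ideal_pow_mul (I : R -> Prop) (k : nat) (P : M -> Prop) : M -> Prop :=
  match k with
  | 0 => P
  | k'.+1 => ideal_mul I (ideal_pow_mul I k' P)
  end.

Definition mpowM (m : R -> Prop) (i : nat) : M -> Prop :=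
  ideal_pow_mul m i (fun _ => True).

Definition sum_sub (P Q : M -> Prop) : M -> Prop :=
  fun x => exists p q, [/\ P p, Q q & x = p + q].

Definition inter_sub (P Q : M -> Prop) : M -> Prop := fun x => P x /\ Q x.

Definition AR_prop (m : R -> Prop) (L : M -> Prop) (s : nat) : Prop :=
  forall n, (s <= n)%N -> forall x,
    inter_sub (mpowM m n) L x <->
    ideal_pow_mul m (n - s) (inter_sub (mpowM m s) L) x.

Definition is_AR_number (m : R -> Prop) (L : M -> Prop) (s : nat) : Prop :=
  AR_prop m L s /\ forall t, AR_prop m L t -> (s <= t)%N.

(* Degree-i component of the initial module L^*, represented by its preimage
   (L ∩ m^i M + m^(i+1) M) in m^i M; the actual component is this set
   modulo m^(i+1) M. *)
Definition initial_comp (m : R -> Prop) (L : M -> Prop) (i : nat) : M -> Prop :=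
  sum_sub (inter_sub L (mpowM m i)) (mpowM m i.+1).

(* L^* ⊆ K^* as graded submodules of gr_m(M): componentwise inclusion. *)
Definition initial_subset (m : R -> Prop) (L K : M -> Prop) : Prop :=
  forall i x, initial_comp m L i x -> initial_comp m K i x.

End CommAlg.

(* Main.v *)
Require Import Defs.
From mathcomp Require Import all_boot all_algebra zify.
Local Open Scope ring_scope.
Import GRing.Theory.

Section Aux.
Variable R : comUnitRingType.
Variable M : lmodType R.
Implicit Types (I : R -> Prop) (P Q A B : M -> Prop).

Lemma im_mono I P Q : (forall x, P x -> Q x) -> forall x, ideal_mul I P x -> ideal_mul I Q x.
Proof.
move=> PQ x [n [a [y [Ha Hy ->]]]]; exists n, a, y; split => // i; exact: PQ.
Qed.

Lemma ipm_mono I P Q k : (forall x, P x -> Q x) ->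
  forall x, ideal_pow_mul I k P x -> ideal_pow_mul I k Q x.
Proof.
elim: k => [|k IH] PQ x //=; [exact: PQ|]. apply: im_mono. exact: IH.
Qed.

Lemma ipm_add I P j k x :
  ideal_pow_mul I j (ideal_pow_mul I k P) x <-> ideal_pow_mul I (j + k) P x.
Proof.
elim: j x => [|j IH] x; first by rewrite add0n.
rewrite addSn /=; split; apply: im_mono => y; apply IH.
Qed.

Lemma im_submod I P : is_ideal I -> is_submod (ideal_mul I P).
Proof.
move=> [I0 ID IM]; split.
- exists 0%N, (fun _ => 0), (fun _ => 0); split => //; try by case.
  by rewrite big_ord0.
- move=> x y [n1 [a1 [y1 [Ha1 Hy1 ->]]]] [n2 [a2 [y2 [Ha2 Hy2 ->]]]].
  exists (n1 + n2)%N,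
    (fun i => match split i with inl j => a1 j | inr j => a2 j end),
    (fun i => match split i with inl j => y1 j | inr j => y2 j end).
  split.
  + by move=> i; case: (split i).
  + by move=> i; case: (split i).
  + rewrite big_split_ord /=; congr (_ + _); apply: eq_bigr => i _.
    * by have /= -> := @unsplitK n1 n2 (inl i).
    * by have /= -> := @unsplitK n1 n2 (inr i).
- move=> r x [n [a [y [Ha Hy ->]]]].
  exists n, (fun i => r * a i), y; split => //; first by move=> i; apply: IM.
  rewrite scaler_sumr; apply: eq_bigr => i _; by rewrite scalerA.
Qed.

Lemma ipm_submod I P k : is_ideal I -> is_submod P -> is_submod (ideal_pow_mul I k P).
Proof. case: k => [|k] //= HI _; exact: im_submod. Qed.

Lemma submod_sub P x y : is_submod P -> P x -> P y -> P (x - y).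
Proof.
move=> [_ HD HS] Px Py; apply: HD => //; rewrite -scaleN1r; exact: HS.
Qed.

Lemma im_sub I P : is_submod P -> forall x, ideal_mul I P x -> P x.
Proof.
move=> [H0 HD HS] x [n [a [y [Ha Hy ->]]]].
apply: (big_ind (fun v => P v)) => // i _; exact: HS.
Qed.

Lemma ipm_sub I P k : is_ideal I -> is_submod P -> forall x, ideal_pow_mul I k P x -> P x.
Proof.
move=> HI HP; elim: k => [|k IH] x //= H.
apply: IH; apply: (im_sub _ _ (ipm_submod _ _ k HI HP)); exact: H.
Qed.
Lemma mpow_submod I k : is_ideal I -> is_submod (mpowM (M:=M) I k).
Proof. move=> HI; apply: ipm_submod => //; by split. Qed.

Lemma mpow_le I j k : is_ideal I -> (k <= j)%N -> forall x : M, mpowM I j x -> mpowM I k x.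
Proof.
move=> HI /subnK <-; elim: (j - k)%N => [|d IH] x //=.
rewrite addSn => H; apply: IH; apply: (im_sub _ _ (mpow_submod _ _ HI)); exact: H.
Qed.

Lemma im_single I P a p : I a -> P p -> ideal_mul I P (a *: p).
Proof.
move=> Ha Hp; exists 1%N, (fun _ => a), (fun _ => p); split => //.
by rewrite big_ord1.
Qed.

Lemma ipm_decomp I P A B k : is_ideal I -> (forall x, P x -> sum_sub A B x) ->
  forall x, ideal_pow_mul I k P x ->
    sum_sub (ideal_pow_mul I k A) (ideal_pow_mul I k B) x.
Proof.
move=> HI; elim: k => [|k IH] HP x //=; first exact: HP.
move=> [n [a [y [Ha Hy ->]]]].
have [HA0 HAD _] := im_submod I (ideal_pow_mul I k A) HI.
have [HB0 HBD _] := im_submod I (ideal_pow_mul I k B) HI.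
apply: (big_ind (fun v => sum_sub _ _ v)).
- exists 0, 0; split => //; by rewrite addr0.
- move=> u v [p1 [q1 [Hp1 Hq1 ->]]] [p2 [q2 [Hp2 Hq2 ->]]].
  exists (p1 + p2), (q1 + q2); split; [exact: HAD|exact: HBD|].
  by rewrite addrACA.
- move=> i _; have [p [q [Hp Hq ->]]] := IH HP _ (Hy i).
  exists (a i *: p), (a i *: q); split; [exact: im_single|exact: im_single|].
  by rewrite scalerDr.
Qed.

End Aux.
Arguments mpow_submod {R M}.
Arguments submod_sub {R M}.
Arguments mpow_le {R M I j k}.
Arguments ipm_decomp {R M I P A B}.
Arguments ipm_sub {R M I P}.
Arguments ipm_mono {R M I P Q k} PQ {x}.
Arguments ipm_add {R M I P j k x}.

Theorem proposition3p1 (R : comUnitRingType) (m : R -> Prop)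
  (M : lmodType R) (L K : M -> Prop) (N : nat) :
  noetherian_ring R ->
  local_ring_with_max m ->
  fin_gen_module M ->
  is_submod L ->
  (exists s, is_AR_number m L s /\ (s < N)%N) ->
  is_submod K ->
  (forall x, sum_sub L (mpowM m N) x <-> sum_sub K (mpowM m N) x) ->
  initial_subset m L K.
Proof.
move=> _ [HI _ _] _ HL [s [[HAR _] HsN]] HK HLK i x [l [y [[Ll Ml] Hy ->]]].
have Msub j : is_submod (mpowM (M:=M) m j) := mpow_submod m j HI.
have M0 j : mpowM m j (0:M) by case: (Msub j).
have MD j (u v : M) : mpowM m j u -> mpowM m j v -> mpowM m j (u + v).
  by case: (Msub j) => _ H _; apply: H.
have inLK p : L p -> exists k z, [/\ K k, mpowM m N z & p = k + z].
  move=> Lp; have [k [z [Kk Hz ->]]] := (HLK p).1 (ex_intro _ p (ex_intro _ 0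
     (And3 Lp (M0 N) (esym (addr0 p))))).
  by exists k, z.
case: (ltnP i N) => HiN.
- have [k [z [Kk Hz Hl]]] := inLK l Ll.
  exists k, (z + y); split.
  + split => //. have -> : k = l - z by rewrite Hl addrK.
    apply: submod_sub => //; apply: (mpow_le HI (ltnW HiN)) Hz.
  + apply: MD => //; exact: (mpow_le HI HiN) Hz.
  + by rewrite Hl addrA.
- have Hsi : (s <= i)%N by apply: leq_trans (ltnW HsN) HiN.
  have H1 := (HAR i Hsi l).1 (conj Ml Ll).
  have Hdec : forall p, inter_sub (mpowM m s) L p ->
      sum_sub (inter_sub K (mpowM m s)) (mpowM m N) p.
    move=> p [Mp Lp]; have [k [z [Kk Hz Hp]]] := inLK p Lp.
    exists k, z; split => //; split => //.
    have -> : k = p - z by rewrite Hp addrK.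
    apply: submod_sub => //; apply: (mpow_le HI (ltnW HsN)) Hz.
  have [k [z [Hk Hz ->]]] := ipm_decomp (i - s) HI Hdec _ H1.
  exists k, (z + y); split.
  + split.
    * apply: (ipm_sub (i - s) HI HK); apply: (ipm_mono _ Hk) => u [].
      by [].
    * have : ideal_pow_mul m (i - s) (mpowM m s) k.
        by apply: (ipm_mono _ Hk) => u [].
      by move/ipm_add; rewrite subnK.
  + apply: MD => //; move/ipm_add: Hz => Hz.
    have Hle : (i.+1 <= i - s + N)%N by lia.
    exact: (mpow_le HI Hle _ Hz).
  + by rewrite addrA.
Qed.
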